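(* Let $\diamond$ be the operation on $\mathcal A$-valued moulds defined in the context. Then: (i) $\diamond$ is associative; (ii) if $N$ is symmetrel, then $M\diamond N=M\circ N$ for every mould $M$; (iii) if $M$ and $N$ are both symmetrel, then $M\circ N$ is symmetrel.
   Context: Let $\bm k$ be a field, $\Omega$ a set with a commutative semigroup law written additively ($[a+b]$ the sum in $\Omega$), $\Omega^*$ the free monoid of words on $\Omega$ with empty word $\mathbf 1$, $\|\bm\omega\|=[\omega_1+\cdots+\omega_n]\in\Omega$ the weight of a nonempty word $\bm\omega=\omega_1\cdots\omega_n$, and $\mathcal H^\Omega$ the $\bm k$-vector space with basis $\Omega^*$. The quasi-shuffle product $\star$ on $\mathcal H^\Omega$ is defined bilinearly by $\mathbf 1\star\bm\omega=\bm\omega\star\mathbf 1=\bm\omega$ and $a\bm u\star b\bm v=a(\bm u\star b\bm v)+b(a\bm u\star\bm v)+[a+b](\bm u\star\bm v)$ for letters $a,b$ and words $\bm u,\bm v$. Let $\mathcal A$ be a commutative unital $\bm k$-algebra; a mould is a linear map $M:\mathcal H^\Omega\to\mathcal A$, $M^{\bm\omega}:=M(\bm\omega)$. A mould $N$ is symmetrel if $N^{\mathbf 1}=1$ and $N^{\bm\omega'\star\bm\omega''}=N^{\bm\omega'}N^{\bm\omega''}$ for all words $\bm\omega',\bm\omega''$. Mould composition: $(M\circ N)^{\mathbf 1}=M^{\mathbf 1}$ and for $\bm\omega\neq\mathbf 1$, $(M\circ N)^{\bm\omega}=\sum_{s\ge1}\sum_{\bm\omega=\bm\omega^1\cdots\bm\omega^s}M^{\|\bm\omega^1\|\cdots\|\bm\omega^s\|}N^{\bm\omega^1}\cdots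 N^{\bm\omega^s}$, the inner sum over all ways of writing $\bm\omega$ as a concatenation of $s$ nonempty words, $\|\bm\omega^1\|\cdots\|\bm\omega^s\|$ being the word formed by their weights. The diamond composition is $(M\diamond N)^{\mathbf 1}=M^{\mathbf 1}N^{\mathbf 1}$ and for $\bm\omega\neq\mathbf 1$, $(M\diamond N)^{\bm\omega}=\sum_{s\ge1}\sum_{\bm\omega=\bm\omega^1\cdots\bm\omega^s}M^{\|\bm\omega^1\|\cdots\|\bm\omega^s\|}N^{\bm\omega^1\star\cdots\star\bm\omega^s}$ (same index set). *)

(* Defs.v *)
From HB Require Import structures.
From mathcomp Require Import all_boot all_order all_algebra.
Set Implicit Arguments. Unset Strict Implicit. Unset Printing Implicit Defensive.
Import GRing.Theory.
Local Open Scope ring_scope.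

Section Moulds.
Variable Omega : Type.
Variable add : Omega -> Omega -> Omega.

(* Words of Omega^* are [seq Omega]; the empty word 1 is [::].
   An element of H^Omega with nonnegative integer coefficients (all that is
   needed: quasi-shuffles of words have such coefficients) is represented by
   a list of words, repetitions encoding multiplicities. *)

(* Quasi-shuffle of two words, as a formal sum (list) of words:
   1*w = w*1 = w,  au * bv = a(u * bv) + b(au * v) + [a+b](u * v). *)
Fixpoint qsh (u v : seq Omega) {struct u} : seq (seq Omega) :=
  match u with
  | [::] => [:: v]
  | a :: u' =>
    (fix qsh_u (v : seq Omega) : seq (seq Omega) :=
       match v with
       | [::] => [:: u]
       | b :: v' =>
           map (cons a) (qsh u' v) ++ map (cons b) (qsh_u v')
             ++ map (cons (add a b)) (qsh u' v')
       end) v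
  end.

Definition qshL (l1 l2 : seq (seq Omega)) : seq (seq Omega) :=
  flatten [seq qsh u v | u <- l1, v <- l2].

Definition qsh_iter (ws : seq (seq Omega)) : seq (seq Omega) :=
  foldr (fun w acc => qshL [:: w] acc) [:: [::]] ws.

(* A nonempty word a p is encoded as the pair (a, p). *)
Definition bword (b : Omega * seq Omega) : seq Omega := b.1 :: b.2.

Definition weight (b : Omega * seq Omega) : Omega := foldl add b.1 b.2.

(* All ways of writing a word as a concatenation w^1 ... w^s of nonempty
   words (each exactly once). *)
Fixpoint comps (w : seq Omega) : seq (seq (Omega * seq Omega)) :=
  match w with
  | [::] => [:: [::]]
  | a :: w' =>
      [seq (a, [::]) :: c | c <- comps w'] ++
      flatten [seq match c with
                   | [::] => [::]
                   | bp :: c' => [:: (a, bp.1 :: bp.2) :: c']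
                   end | c <- comps w']
  end.

Variable R : fieldType.
Variable A : comAlgType R.

(* A mould (linear map H^Omega -> A) is determined by its values on the
   basis Omega^*; [ev M s] is its linear extension applied to a formal sum. *)
Definition mould := seq Omega -> A.

Definition ev (M : mould) (s : seq (seq Omega)) : A := \sum_(w <- s) M w.

Definition symmetrel (N : mould) : Prop :=
  N [::] = 1 /\ forall u v : seq Omega, ev N (qsh u v) = N u * N v.

Definition mcomp (M N : mould) : mould := fun w =>
  match w with
  | [::] => M [::]
  | _ => \sum_(c <- comps w) M (map weight c) * \prod_(b <- c) N (bword b)
  end.

Definition diamond (M N : mould) : mould := fun w =>
  match w with
  | [::] => M [::] * N [::]
  | _ => \sum_(c <- comps w) M (map weight c) * ev N (qsh_iter (map bword c))
  end.

End Moulds.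

(* Main.v *)
Require Import Defs.
From HB Require Import structures.
From mathcomp Require Import all_boot all_order all_algebra ring.
Import GRing.Theory.
Local Open Scope ring_scope.

Section Dev.
Variable Omega : Type.
Variable add : Omega -> Omega -> Omega.
Hypothesis addA : associative add.
Hypothesis addC : commutative add.
Variable V : comRingType.

Definition QS (u v : seq Omega) (f : seq Omega -> V) : V :=
  \sum_(z <- qsh add u v) f z.

Lemma eq_QS u v f g : (forall z, f z = g z) -> QS u v f = QS u v g.
Proof. by move=> h; apply: eq_bigr => z _; apply: h. Qed.

Lemma QS_nill v f : QS [::] v f = f v.
Proof. by rewrite /QS /= big_seq1. Qed.

Lemma QS_nilr u f : QS u [::] f = f u.
Proof. by case: u => [|a u]; rewrite /QS /= big_seq1. Qed.

Lemma qsh_cons_eq a u b v : qsh add (a :: u) (b :: v) =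
  [seq a :: i | i <- qsh add u (b :: v)] ++ [seq b :: i | i <- qsh add (a :: u) v]
  ++ [seq add a b :: i | i <- qsh add u v].
Proof. by []. Qed.

Lemma QS_cons a u b v f : QS (a :: u) (b :: v) f =
  QS u (b :: v) (fun z => f (a :: z)) + QS (a :: u) v (fun z => f (b :: z))
  + QS u v (fun z => f (add a b :: z)).
Proof.
rewrite /QS qsh_cons_eq !big_cat !big_map; exact: addrA.
Qed.

Lemma QS_add u v f g : QS u v (fun z => f z + g z) = QS u v f + QS u v g.
Proof. by rewrite /QS big_split. Qed.

Lemma QS_sumr (I : Type) (r : seq I) u v (F : I -> seq Omega -> V) :
  QS u v (fun z => \sum_(i <- r) F i z) = \sum_(i <- r) QS u v (F i).
Proof. by rewrite /QS exchange_big. Qed.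

Lemma QS_mull u v (c : V) f : QS u v (fun z => c * f z) = c * QS u v f.
Proof. by rewrite /QS mulr_sumr. Qed.

Lemma QS_QS u v u' v' (F : seq Omega -> seq Omega -> V) :
  QS u v (fun z => QS u' v' (F z)) = QS u' v' (fun z' => QS u v (fun z => F z z')).
Proof. by rewrite /QS exchange_big. Qed.

Lemma QSC u v f : QS u v f = QS v u f.
Proof.
elim: u v f => [|a u IHu] v f; first by rewrite QS_nill QS_nilr.
elim: v f => [|b v IHv] f; first by rewrite QS_nill QS_nilr.
rewrite !QS_cons (IHu (b :: v)) (IHv) (IHu v) addC; ring.
Qed.

Lemma QSA u v t f :
  QS u v (fun z => QS z t f) = QS v t (fun z => QS u z f).
Proof.
elim: u v t f => [|a u IHu] v t f.
  rewrite QS_nill; apply: eq_QS => z; by rewrite QS_nill.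
elim: v t f => [|b v IHv] t f.
  rewrite QS_nilr QS_nill; done.
elim: t f => [|c t IHt] f.
  rewrite QS_nilr; apply: eq_QS => z; by rewrite QS_nilr.
have e1 : QS u (b :: v) (fun z => QS z (c :: t) (fun z0 => f (a :: z0))) =
  QS v (c :: t) (fun z => QS u (b :: z) (fun z0 => f (a :: z0))) +
  QS (b :: v) t (fun z => QS u (c :: z) (fun z0 => f (a :: z0))) +
  QS v t (fun z => QS u (add b c :: z) (fun z0 => f (a :: z0))).
  by rewrite IHu QS_cons.
have e2 : QS (a :: u) v (fun z => QS z (c :: t) (fun z0 => f (b :: z0))) =
  QS v (c :: t) (fun z => QS (a :: u) z (fun z0 => f (b :: z0))) by rewrite IHv.
have e3 : QS u v (fun z => QS z (c :: t) (fun z0 => f (add a b :: z0))) =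
  QS v (c :: t) (fun z => QS u z (fun z0 => f (add a b :: z0))) by rewrite IHu.
have e4 : QS u (b :: v) (fun z => QS (a :: z) t (fun z0 => f (c :: z0))) +
  QS (a :: u) v (fun z => QS (b :: z) t (fun z0 => f (c :: z0))) +
  QS u v (fun z => QS (add a b :: z) t (fun z0 => f (c :: z0))) =
  QS (b :: v) t (fun z => QS (a :: u) z (fun z0 => f (c :: z0))).
  by rewrite -IHt QS_cons.
have e5 : QS u (b :: v) (fun z => QS z t (fun z0 => f (add a c :: z0))) =
  QS (b :: v) t (fun z => QS u z (fun z0 => f (add a c :: z0))) by rewrite IHu.
have e6 : QS (a :: u) v (fun z => QS z t (fun z0 => f (add b c :: z0))) =
  QS v t (fun z => QS (a :: u) z (fun z0 => f (add b c :: z0))) by rewrite IHv.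
have e7 : QS u v (fun z => QS z t (fun z0 => f (add (add a b) c :: z0))) =
  QS v t (fun z => QS u z (fun z0 => f (add a (add b c) :: z0))) by rewrite IHu addA.
rewrite QS_cons.
under eq_QS => z do rewrite QS_cons.
under [QS (a :: u) v _]eq_QS => z do rewrite QS_cons.
under [QS u v _]eq_QS => z do rewrite QS_cons.
rewrite !QS_add.
rewrite [RHS]QS_cons.
symmetry.
under eq_QS => z do rewrite QS_cons.
under [QS (b :: v) t _]eq_QS => z do rewrite QS_cons.
under [QS v t _]eq_QS => z do rewrite QS_cons.
rewrite !QS_add.
rewrite e1 e2 e3 e5 e6 e7.
move: e4; set X := QS (b :: v) t _ => e4.
rewrite -e4; ring.
Qed.

Definition oadd (x y : option Omega) : option Omega :=
  match x with
  | None => y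
  | Some x' => match y with None => Some x' | Some y' => Some (add x' y') end
  end.
Definition wo (w : seq Omega) : option Omega :=
  match w with [::] => None | a :: q => Some (foldl add a q) end.

Lemma foldl_addl x y l : foldl add (add x y) l = add x (foldl add y l).
Proof. by elim: l x y => [|c l IH] x y //=; rewrite -addA IH. Qed.

Lemma wo_cons a z : wo (a :: z) = oadd (Some a) (wo z).
Proof. by case: z => [|b z] //=; rewrite foldl_addl. Qed.

Lemma oaddA x y z : oadd x (oadd y z) = oadd (oadd x y) z.
Proof. by case: x => [x|]; case: y => [y|]; case: z => [z|] //=; rewrite addA. Qed.

Lemma oaddC x y : oadd x y = oadd y x.
Proof. by case: x => [x|]; case: y => [y|] //=; rewrite addC. Qed.

Lemma oadd0r x : oadd x None = x.
Proof. by case: x. Qed.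

Lemma oadd_medial x y z w : oadd (oadd x y) (oadd z w) = oadd (oadd x z) (oadd y w).
Proof. by rewrite -!oaddA [oadd y (oadd z w)]oaddA [oadd y z]oaddC -oaddA. Qed.

Lemma wo_cat p s : wo (p ++ s) = oadd (wo p) (wo s).
Proof.
elim: p => [|a p IH] //=.
by rewrite -/(wo (a :: (p ++ s))) wo_cons IH oaddA -wo_cons.
Qed.

Lemma QS_wt u v f g :
  (forall z, wo z = oadd (wo u) (wo v) -> f z = g z) -> QS u v f = QS u v g.
Proof.
elim: u v f g => [|a u IHu] v f g.
  by move=> h; rewrite !QS_nill; apply: h.
elim: v f g => [|b v IHv] f g.
  by move=> h; rewrite !QS_nilr; apply: h; rewrite oadd0r.
move=> h; rewrite !QS_cons.
congr (_ + _ + _).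
- apply: IHu => z hz; apply: h.
  by rewrite wo_cons hz oaddA -wo_cons.
- apply: IHv => z hz; apply: h.
  rewrite wo_cons hz oaddA [oadd (Some b) _]oaddC -oaddA -wo_cons; done.
- apply: IHu => z hz; apply: h.
  rewrite wo_cons hz !wo_cons -[Some (add a b)]/(oadd (Some a) (Some b)).
  by rewrite oadd_medial.
Qed.

Fixpoint splits (w : seq Omega) : seq (seq Omega * seq Omega) :=
  match w with
  | [::] => [:: ([::], [::])]
  | a :: w' => ([::], a :: w') :: [seq (a :: t.1, t.2) | t <- splits w']
  end.

Fixpoint allp (T : Type) (P : T -> Prop) (s : seq T) : Prop :=
  match s with [::] => True | x :: s' => P x /\ allp T P s' end.
Arguments allp [T].

Lemma big_allp (T : Type) (P : T -> Prop) (s : seq T) (f g : T -> V) :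
  allp P s -> (forall x, P x -> f x = g x) -> \sum_(x <- s) f x = \sum_(x <- s) g x.
Proof.
elim: s => [|x s IH] /=; first by rewrite !big_nil.
by move=> [Px Ps] h; rewrite !big_cons h // IH.
Qed.

Arguments big_allp [T P s f g].

Lemma allp_map (T U : Type) (P : U -> Prop) (h : T -> U) (s : seq T) :
  allp P (map h s) = allp (fun x => P (h x)) s.
Proof. by elim: s => //= x s ->. Qed.

Lemma allp_impl (T : Type) (P Q : T -> Prop) (s : seq T) :
  (forall x, P x -> Q x) -> allp P s -> allp Q s.
Proof. by move=> h; elim: s => //= x s IH [/h ? /IH ?]. Qed.

Lemma splits_cat w : allp (fun t => t.1 ++ t.2 = w) (splits w).
Proof.
elim: w => [|a w IH] //=; split => //.
rewrite allp_map; apply: allp_impl IH => t /= ->; done.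
Qed.

Lemma sum_splits_cons a z (F : seq Omega -> seq Omega -> V) :
  \sum_(t <- splits (a :: z)) F t.1 t.2 =
  F [::] (a :: z) + \sum_(t <- splits z) F (a :: t.1) t.2.
Proof. by rewrite /= big_cons big_map. Qed.

Lemma sum_splits_cons2 a z (G : seq Omega * seq Omega -> V) :
  \sum_(t <- splits (a :: z)) G t =
  G ([::], a :: z) + \sum_(t <- splits z) G (a :: t.1, t.2).
Proof. by rewrite /= big_cons big_map. Qed.

Lemma sum2_splits_cons (T : Type) (r : seq T) b v (H : T -> seq Omega * seq Omega -> V) :
  \sum_(x <- r) \sum_(t <- splits (b :: v)) H x t =
  \sum_(x <- r) H x ([::], b :: v) + \sum_(x <- r) \sum_(t <- splits v) H x (b :: t.1, t.2).
Proof. by rewrite -big_split; apply: eq_bigr => x _; rewrite sum_splits_cons2. Qed.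

Lemma rearr (X1 X2 X3 X4 X5 X6 X7 X8 Y1 Y2 Y3 Y4 : V) :
  Y1 = X1 + X4 + X7 -> X2 = Y3 -> X5 = Y2 -> Y4 = X3 + X6 + X8 ->
  X1 + (X2 + X3) + (X4 + (X5 + X6)) + (X7 + X8) = Y1 + Y2 + (Y3 + Y4).
Proof. move=> -> -> -> ->; ring. Qed.

Lemma CUT u v (F : seq Omega -> seq Omega -> V) :
  QS u v (fun z => \sum_(t <- splits z) F t.1 t.2) =
  \sum_(t1 <- splits u) \sum_(t2 <- splits v) QS t1.1 t2.1 (fun p => QS t1.2 t2.2 (F p)).
Proof.
elim: u v F => [|a u IHu] v F.
  rewrite QS_nill /= big_seq1; apply: eq_bigr => t _; by rewrite !QS_nill.
elim: v F => [|b v IHv] F.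
  rewrite QS_nilr; apply: eq_bigr => t _; by rewrite big_seq1 !QS_nilr.
rewrite QS_cons.
under eq_QS => z do rewrite sum_splits_cons.
under [QS (a :: u) v _]eq_QS => z do rewrite sum_splits_cons.
under [QS u v _]eq_QS => z do rewrite sum_splits_cons.
rewrite !QS_add.
rewrite (IHu (b :: v) (fun p s => F (a :: p) s)) (IHv (fun p s => F (b :: p) s)).
rewrite (IHu v (fun p s => F (add a b :: p) s)).
rewrite !(sum_splits_cons2 a u).
rewrite !sum2_splits_cons (sum_splits_cons2 b v) /=.
apply: rearr.
- by rewrite QS_nill QS_cons.
- by apply: eq_bigr => x _; rewrite !QS_nilr.
- by apply: eq_bigr => x _; rewrite !QS_nill.
- rewrite -!big_split; apply: eq_bigr => x _; rewrite -!big_split.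
  by apply: eq_bigr => t _; rewrite QS_cons.
Qed.




Definition DL (w : seq Omega) : seq (seq Omega * seq Omega) :=
  flatten [seq [seq (map (weight add) c, y) | y <- qsh_iter add (map (@bword Omega) c)]
          | c <- comps w].
Definition DS (w : seq Omega) (F : seq Omega -> seq Omega -> V) : V :=
  \sum_(xy <- DL w) F xy.1 xy.2.

Lemma DS_expand w F : DS w F =
  \sum_(c <- comps w) \sum_(y <- qsh_iter add (map (@bword Omega) c)) F (map (weight add) c) y.
Proof. by rewrite /DS /DL big_flatten big_map; apply: eq_bigr => c _; rewrite big_map. Qed.

Lemma comps_cons_eq (a : Omega) w : comps (a :: w) =
  [seq (a, [::]) :: c | c <- comps w] ++
  flatten [seq match c with
               | [::] => [::]
               | bp :: c' => [:: (a, bp.1 :: bp.2) :: c']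
               end | c <- comps w].
Proof. by []. Qed.

Lemma comps_rec a w (G : seq (Omega * seq Omega) -> V) :
  \sum_(c <- comps (a :: w)) G c =
  \sum_(t <- splits w) \sum_(c <- comps t.2) G ((a, t.1) :: c).
Proof.
elim: w a G => [|b w IH] a G.
  by rewrite comps_cons_eq /= !big_seq1.
rewrite comps_cons_eq big_cat big_map big_flatten big_map.
rewrite (sum_splits_cons2 b w (fun t => \sum_(c <- comps t.2) G ((a, t.1) :: c))) /=.
congr (_ + _).
rewrite (IH b (fun c => \sum_(x <- match c with
               | [::] => [::]
               | bp :: c' => [:: (a, bp.1 :: bp.2) :: c']
               end) G x)).
by apply: eq_bigr => t _; apply: eq_bigr => c _; rewrite big_seq1.
Qed.

Lemma qshL_sum u l (f : seq Omega -> V) :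
  \sum_(y <- qshL add [:: u] l) f y = \sum_(v <- l) QS u v f.
Proof. by rewrite /qshL big_flatten big_allpairs_dep big_seq1. Qed.

Lemma DS_nil F : DS [::] F = F [::] [::].
Proof. by rewrite DS_expand /= !big_seq1. Qed.

Lemma DS_cons a w F : DS (a :: w) F =
  \sum_(t <- splits w) DS t.2 (fun x y => QS (a :: t.1) y (fun y' => F (foldl add a t.1 :: x) y')).
Proof.
rewrite DS_expand comps_rec; apply: eq_bigr => t _.
rewrite DS_expand; apply: eq_bigr => c _.
rewrite [qsh_iter _ _]/= qshL_sum; done.
Qed.

Lemma eq_DS w F G : (forall x y, F x y = G x y) -> DS w F = DS w G.
Proof. by move=> h; apply: eq_bigr => xy _; apply: h. Qed.

Lemma DS_add w F G : DS w (fun x y => F x y + G x y) = DS w F + DS w G.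
Proof. by rewrite /DS big_split. Qed.

Lemma DS_sumr (I : Type) (r : seq I) w (F : I -> seq Omega -> seq Omega -> V) :
  DS w (fun x y => \sum_(i <- r) F i x y) = \sum_(i <- r) DS w (F i).
Proof. by rewrite /DS exchange_big. Qed.

Lemma DS_mull w (c : V) F : DS w (fun x y => c * F x y) = c * DS w F.
Proof. by rewrite /DS mulr_sumr. Qed.

Lemma DS_mulr w (c : V) F : DS w (fun x y => F x y * c) = DS w F * c.
Proof. by rewrite /DS mulr_suml. Qed.

Lemma DS_QS w u v (G : seq Omega -> seq Omega -> seq Omega -> V) :
  DS w (fun x y => QS u v (G x y)) = QS u v (fun z => DS w (fun x y => G x y z)).
Proof. by rewrite /DS /QS exchange_big. Qed.

Lemma DS_DS w w' (G : seq Omega -> seq Omega -> seq Omega -> seq Omega -> V) :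
  DS w (fun x y => DS w' (G x y)) = DS w' (fun x' y' => DS w (fun x y => G x y x' y')).
Proof. by rewrite /DS exchange_big. Qed.

Lemma splits_size w : allp (fun t => size t.2 <= size w)%N (splits w).
Proof.
apply: allp_impl (splits_cat w) => t <-; by rewrite size_cat leq_addl.
Qed.

Lemma DS_wt w F G : (forall x y, wo x = wo w -> F x y = G x y) -> DS w F = DS w G.
Proof.
move: {2}(size w) (leqnn (size w)) => n.
elim: n w F G => [|n IH] [|a w] F G //= hs h; try by rewrite !DS_nil; apply: h.
rewrite !DS_cons; apply: (big_allp (splits_cat w)) => t ht.
apply: IH.
  by move: hs; rewrite -ht size_cat ltnS => /(leq_trans (leq_addl _ _)).
move=> x y hx; apply: eq_QS => y'; apply: h.
by rewrite wo_cons hx -ht -/(wo (a :: (t.1 ++ t.2))) -cat_cons wo_cat.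
Qed.


Lemma QS_DS_swap u v w (H : seq Omega -> seq Omega -> seq Omega -> V) :
  QS u v (fun z => DS w (fun x y => H z x y)) = DS w (fun x y => QS u v (fun z => H z x y)).
Proof. by rewrite /QS /DS exchange_big. Qed.

Lemma QSA' p y1 y2 f :
  QS p y2 (fun z => QS y1 z f) = QS y1 y2 (fun z => QS p z f).
Proof.
under eq_QS => z do rewrite QSC.
by rewrite QSA QSC.
Qed.

Lemma QS_medial p1 y1 p2 y2 f :
  QS p1 y1 (fun a => QS p2 y2 (fun b => QS a b f)) =
  QS p1 p2 (fun p => QS y1 y2 (fun y => QS p y f)).
Proof.
under eq_QS => a do rewrite -QSA.
rewrite QSA QSC -QSA.
by apply: eq_QS => z; rewrite QSA.
Qed.

Definition Hf (F : seq Omega -> seq Omega -> V) (p s : seq Omega) : V :=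
  match p with
  | [::] => 0
  | c :: q => DS s (fun x y => QS p y (fun y' => F (foldl add c q :: x) y'))
  end.

Lemma DS_split_cons c z F : DS (c :: z) F = \sum_(t <- splits (c :: z)) Hf F t.1 t.2.
Proof. by rewrite (sum_splits_cons2 c z) /= add0r DS_cons. Qed.

Definition Ka (F : seq Omega -> seq Omega -> V) (x1 y1 x2 y2 : seq Omega) : V :=
  if x1 is c1 :: x1' then QS x1' x2 (fun x => QS y1 y2 (F (c1 :: x))) else 0.
Definition Kb (F : seq Omega -> seq Omega -> V) (x1 y1 x2 y2 : seq Omega) : V :=
  if x2 is c2 :: x2' then QS x1 x2' (fun x => QS y1 y2 (F (c2 :: x))) else 0.
Definition Kc (F : seq Omega -> seq Omega -> V) (x1 y1 x2 y2 : seq Omega) : V :=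
  if x1 is c1 :: x1' then
    if x2 is c2 :: x2' then QS x1' x2' (fun x => QS y1 y2 (F (add c1 c2 :: x))) else 0
  else 0.

Lemma R_split u v F : u <> [::] -> v <> [::] ->
  DS u (fun x1 y1 => DS v (fun x2 y2 => QS x1 x2 (fun x => QS y1 y2 (F x)))) =
  DS u (fun x1 y1 => DS v (fun x2 y2 => Ka F x1 y1 x2 y2)) +
  DS u (fun x1 y1 => DS v (fun x2 y2 => Kb F x1 y1 x2 y2)) +
  DS u (fun x1 y1 => DS v (fun x2 y2 => Kc F x1 y1 x2 y2)).
Proof.
move=> hu hv; rewrite -!DS_add; apply: DS_wt => x1 y1 hx1.
rewrite -!DS_add; apply: DS_wt => x2 y2 hx2.
case: x1 hx1 => [|c1 x1]; first by case: u hu.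
case: x2 hx2 => [|c2 x2]; first by case: v hv.
by move=> _ _; rewrite QS_cons.
Qed.

Lemma MOR n : forall u v F, (size u + size v <= n)%N ->
  QS u v (fun z => DS z F) =
  DS u (fun x1 y1 => DS v (fun x2 y2 => QS x1 x2 (fun x => QS y1 y2 (F x)))).
Proof.
elim: n => [|n IH] u v F hs.
  case: u hs => [|a u] // _.
  by rewrite QS_nill DS_nil; apply: eq_DS => x2 y2; rewrite !QS_nill.
case: u hs => [|a u] hs.
  by rewrite QS_nill DS_nil; apply: eq_DS => x2 y2; rewrite !QS_nill.
case: v hs => [|b v] hs.
  by rewrite QS_nilr; apply: eq_DS => x1 y1; rewrite DS_nil !QS_nilr.
have -> : QS (a :: u) (b :: v) (fun z => DS z F) =
    QS (a :: u) (b :: v) (fun z => \sum_(t <- splits z) Hf F t.1 t.2).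
  apply: QS_wt => -[|c z] //= _; by rewrite DS_split_cons.
rewrite CUT R_split //.
rewrite (sum_splits_cons2 a u) (sum_splits_cons2 b v) sum2_splits_cons /=.
rewrite QS_nill.
have -> : QS (a :: u) (b :: v) (Hf F [::]) = 0 by rewrite /QS big1.
rewrite add0r.
have hu : (size u + size (b :: v) <= n)%N by move: hs; rewrite /= addSn ltnS.
have hv : (size (a :: u) + size v <= n)%N by move: hs; rewrite /= addnS ltnS.
have eA : DS (a :: u) (fun x1 y1 => DS (b :: v) (fun x2 y2 => Ka F x1 y1 x2 y2)) =
    \sum_(t1 <- splits u) QS (a :: t1.1) [::] (fun p => QS t1.2 (b :: v) (Hf F p)).
  rewrite DS_cons; apply: (big_allp (splits_size u)) => t1 ht1.
  rewrite QS_nilr.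
  change (QS t1.2 (b :: v) (Hf F (a :: t1.1))) with
    (QS t1.2 (b :: v) (fun z => DS z (fun x y =>
        QS (a :: t1.1) y (fun y' => F (foldl add a t1.1 :: x) y')))).
  rewrite IH; last by apply: leq_trans hu; rewrite leq_add2r.
  apply: eq_DS => x y; rewrite QS_DS_swap; apply: eq_DS => x2 y2.
  rewrite /Ka QS_QS; apply: eq_QS => x'; by rewrite QSA.
have eB : DS (a :: u) (fun x1 y1 => DS (b :: v) (fun x2 y2 => Kb F x1 y1 x2 y2)) =
    \sum_(t2 <- splits v) QS [::] (b :: t2.1) (fun p => QS (a :: u) t2.2 (Hf F p)).
  transitivity (DS (a :: u) (fun x1 y1 => \sum_(t2 <- splits v) DS t2.2 (fun x2 y2 =>
     QS (b :: t2.1) y2 (fun y2' => QS x1 x2 (fun x => QS y1 y2' (F (foldl add b t2.1 :: x))))))).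
    by apply: eq_DS => x1 y1; rewrite DS_cons.
  rewrite DS_sumr; apply: (big_allp (splits_size v)) => t2 ht2.
  rewrite QS_nill.
  change (QS (a :: u) t2.2 (Hf F (b :: t2.1))) with
    (QS (a :: u) t2.2 (fun z => DS z (fun x y =>
        QS (b :: t2.1) y (fun y' => F (foldl add b t2.1 :: x) y')))).
  rewrite IH; last by apply: leq_trans hv; rewrite leq_add2l.
  apply: eq_DS => x1 y1; apply: eq_DS => x2 y2.
  rewrite QS_QS; apply: eq_QS => x; by rewrite QSA'.
have eC : DS (a :: u) (fun x1 y1 => DS (b :: v) (fun x2 y2 => Kc F x1 y1 x2 y2)) =
    \sum_(t1 <- splits u) \sum_(t2 <- splits v)
       QS (a :: t1.1) (b :: t2.1) (fun p => QS t1.2 t2.2 (Hf F p)).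
  rewrite DS_cons; apply: (big_allp (splits_size u)) => t1 ht1.
  transitivity (DS t1.2 (fun x y => QS (a :: t1.1) y (fun y' =>
     \sum_(t2 <- splits v) DS t2.2 (fun x2 y2 => QS (b :: t2.1) y2 (fun y2' =>
        QS x x2 (fun x' => QS y' y2' (F (add (foldl add a t1.1) (foldl add b t2.1) :: x')))))))).
    by apply: eq_DS => x y; apply: eq_QS => y'; rewrite DS_cons.
  under eq_DS => x y do rewrite QS_sumr.
  rewrite DS_sumr; apply: (big_allp (splits_size v)) => t2 ht2.
  transitivity (QS (a :: t1.1) (b :: t2.1) (fun p => QS t1.2 t2.2 (fun z => DS z
      (fun x y => QS p y (fun y' => F ((add (foldl add a t1.1) (foldl add b t2.1)) :: x) y'))))); last first.
    apply: QS_wt => -[|c q] hw; first by discriminate hw.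
    case: hw => hw; apply: eq_QS => z.
    by rewrite -hw.
  transitivity (QS (a :: t1.1) (b :: t2.1) (fun p => DS t1.2 (fun x1 y1 => DS t2.2
      (fun x2 y2 => QS x1 x2 (fun x => QS y1 y2 (fun y => QS p y (fun y' => F ((add (foldl add a t1.1) (foldl add b t2.1)) :: x) y'))))))); last first.
    apply: eq_QS => p; symmetry; apply: IH.
    apply: leq_trans (leq_add ht1 ht2) _.
    by move: hs; rewrite /= addSn ltnS addnS => /ltnW.
  rewrite [RHS]QS_DS_swap; apply: eq_DS => x y.
  rewrite [LHS]QS_DS_swap [RHS]QS_DS_swap; apply: eq_DS => x2 y2.
  under eq_QS => y' do rewrite QS_QS.
  rewrite [LHS]QS_QS [RHS]QS_QS; apply: eq_QS => x'.
  exact: QS_medial.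
rewrite eA eB eC; ring.
Qed.

Lemma MOR' u v F :
  QS u v (fun z => DS z F) =
  DS u (fun x1 y1 => DS v (fun x2 y2 => QS x1 x2 (fun x => QS y1 y2 (F x)))).
Proof. exact: (@MOR (size u + size v) u v F (leqnn _)). Qed.

Lemma splits2 s (f : seq Omega -> seq Omega -> seq Omega -> V) :
  \sum_(t <- splits s) \sum_(r <- splits t.1) f r.1 r.2 t.2 =
  \sum_(t <- splits s) \sum_(r <- splits t.2) f t.1 r.1 r.2.
Proof.
elim: s f => [|b s IH] f; first by rewrite /= !big_seq1.
rewrite (sum_splits_cons2 b s (fun t => \sum_(r <- splits t.1) f r.1 r.2 t.2)).
rewrite (sum_splits_cons2 b s (fun t => \sum_(r <- splits t.2) f t.1 r.1 r.2)) /=.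
rewrite big_seq1 (sum_splits_cons2 b s (fun r => f [::] r.1 r.2)) /=.
under eq_bigr => t _ do rewrite (sum_splits_cons2 b t.1 (fun r => f r.1 r.2 t.2)) /=.
rewrite big_split /=.
rewrite (IH (fun A B C => f (b :: A) B C)).
by rewrite addrA.
Qed.

Lemma SPLIT n : forall s (Phi : seq Omega -> seq Omega -> seq Omega -> V), (size s <= n)%N ->
  DS s (fun x y => \sum_(t <- splits x) Phi t.1 t.2 y) =
  \sum_(t <- splits s) DS t.1 (fun x1 y1 => DS t.2 (fun x2 y2 => QS y1 y2 (Phi x1 x2))).
Proof.
elim: n => [|n IH] [|a s] Phi hs //.
- by rewrite DS_nil /= !big_seq1 !DS_nil QS_nill.
- by rewrite DS_nil /= !big_seq1 !DS_nil QS_nill.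
rewrite (sum_splits_cons2 a s (fun t => DS t.1 (fun x1 y1 => DS t.2 (fun x2 y2 => QS y1 y2 (Phi x1 x2))))) /=.
rewrite DS_nil DS_cons.
transitivity (\sum_(t <- splits s) (DS t.2 (fun x y => QS (a :: t.1) y (fun y' =>
    Phi [::] (foldl add a t.1 :: x) y')) + DS t.2 (fun x y => \sum_(r <- splits x)
    QS (a :: t.1) y (fun y' => Phi (foldl add a t.1 :: r.1) r.2 y')))).
  apply: eq_bigr => t _; rewrite -DS_add; apply: eq_DS => x y.
  rewrite -QS_sumr -QS_add; apply: eq_QS => y'.
  by rewrite (sum_splits_cons2 _ x (fun r => Phi r.1 r.2 y')).
rewrite big_split /=.
congr (_ + _).
  rewrite DS_cons; apply: eq_bigr => t _; apply: eq_DS => x y; apply: eq_QS => y'.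
  by rewrite QS_nill.
symmetry.
pose f := fun A B C => DS B (fun x1 y1 =>
   QS (a :: A) y1 (fun y1' => DS C (fun x2 y2 => QS y1' y2 (Phi (foldl add a A :: x1) x2)))).
transitivity (\sum_(t <- splits s) \sum_(r <- splits t.1) f r.1 r.2 t.2).
  by apply: eq_bigr => t _; rewrite DS_cons.
rewrite (splits2 s f); symmetry.
apply: (big_allp (splits_size s)) => t ht.
rewrite (IH t.2 (fun r1 r2 y => QS (a :: t.1) y (fun y' => Phi (foldl add a t.1 :: r1) r2 y')));
  last by apply: leq_trans ht _.
apply: eq_bigr => r _.
apply: eq_DS => x1 y1.
rewrite [RHS]QS_DS_swap; apply: eq_DS => x2 y2.
by rewrite QSA.
Qed.


Lemma CA n : forall w (G : seq Omega -> seq Omega -> seq Omega -> V), (size w <= n)%N ->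
  DS w (fun x y => DS x (fun x' y' => G x' y' y)) =
  DS w (fun x y => DS y (fun x'' y'' => G x x'' y'')).
Proof.
elim: n => [|n IH] [|a w] G hs //; try by rewrite !DS_nil.
rewrite DS_cons [RHS]DS_cons.
pose LT := fun (t r : seq Omega * seq Omega) => DS r.1 (fun x1 y1 => DS r.2 (fun x2 y2 =>
  QS y1 y2 (fun y => QS (a :: t.1) y (fun y0 => DS x2 (fun x3 y3 =>
    QS (foldl add a t.1 :: x1) y3 (fun y3' => G (foldl add (foldl add a t.1) x1 :: x3) y3' y0)))))).
pose h := fun A B C => DS B (fun x1 y1 => QS (a :: A) y1 (fun y1' => DS C (fun x y =>
  DS x (fun x' y' => QS (foldl add a A :: x1) y' (fun x'' =>
    QS y1' y (fun y'' => G (foldl add a (A ++ B) :: x') x'' y'')))))).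
transitivity (\sum_(t <- splits w) \sum_(r <- splits t.2) LT t r).
  apply: eq_bigr => t _.
  transitivity (DS t.2 (fun x y => \sum_(r <- splits x) QS (a :: t.1) y (fun y0 =>
    DS r.2 (fun x1 y1 => QS (foldl add a t.1 :: r.1) y1 (fun y1' =>
      G (foldl add (foldl add a t.1) r.1 :: x1) y1' y0))))).
    apply: eq_DS => x y; rewrite -QS_sumr; apply: eq_QS => y0; by rewrite DS_cons.
  rewrite (@SPLIT (size t.2) t.2 (fun r1 r2 y => QS (a :: t.1) y (fun y0 =>
    DS r2 (fun x1 y1 => QS (foldl add a t.1 :: r1) y1 (fun y1' =>
      G (foldl add (foldl add a t.1) r1 :: x1) y1' y0)))) (leqnn _)).
  done.
transitivity (\sum_(t <- splits w) \sum_(r <- splits t.2) h t.1 r.1 r.2); last first.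
  rewrite -(splits2 w h); apply: (big_allp (splits_size w)) => t ht.
  transitivity (DS (a :: t.1) (fun x1 y1 => DS t.2 (fun x y => DS x (fun x' y' =>
      QS x1 y' (fun x'' => QS y1 y (fun y'' => G (foldl add a t.1 :: x') x'' y'')))))).
    rewrite DS_cons; apply: (big_allp (splits_cat t.1)) => r hr.
    by rewrite /h hr.
  transitivity (DS (a :: t.1) (fun x1 y1 => DS t.2 (fun x y => DS y (fun x2 y2 =>
      QS x1 x2 (fun x' => QS y1 y2 (fun y'' => G (foldl add a t.1 :: x) x' y'')))))).
    apply: eq_DS => x1 y1.
    apply: (IH t.2 (fun x x2 y2 => QS x1 x2 (fun x' => QS y1 y2 (fun y'' =>
       G (foldl add a t.1 :: x) x' y'')))).
    by apply: leq_trans ht _.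
  rewrite DS_DS; apply: eq_DS => x y.
  by rewrite MOR'.
apply: eq_bigr => t _; apply: eq_bigr => r _.
rewrite /LT /h.
apply: DS_wt => x1 y1 hx1.
have -> : foldl add (foldl add a t.1) x1 = foldl add a (t.1 ++ r.1).
  have := wo_cons (foldl add a t.1) x1.
  by rewrite hx1 -wo_cons /= foldl_cat => -[->].
rewrite [RHS]QS_DS_swap; apply: eq_DS => x2 y2.
rewrite -QSA; apply: eq_QS => z.
rewrite QS_DS_swap; apply: eq_DS => x3 y3.
by rewrite QS_QS.
Qed.

End Dev.

Arguments DS {Omega} add {V} w F.
Arguments QS {Omega} add {V} u v f.

Section Final.
Variable Omega : Type.
Variable add : Omega -> Omega -> Omega.
Hypothesis addA : associative add.
Hypothesis addC : commutative add.
Variable R : fieldType.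
Variable A : comAlgType R.


Lemma diamond_DS (M N : mould Omega A) w :
  diamond add M N w = DS add w (fun x y => M x * N y).
Proof.
rewrite DS_expand; case: w => [|a w] /=; first by rewrite !big_seq1.
apply: eq_bigr => c _; by rewrite /ev mulr_sumr.
Qed.

Lemma ev_qsh_iter (N : mould Omega A) ws : symmetrel add N ->
  ev N (qsh_iter add ws) = \prod_(w <- ws) N w.
Proof.
move=> [N1 NM]; elim: ws => [|w ws IH]; first by rewrite /ev /= big_seq1 big_nil.
rewrite big_cons -IH [qsh_iter _ _]/= /ev qshL_sum mulr_sumr.
by apply: eq_bigr => v _; rewrite -NM.
Qed.

Lemma diamond_mcomp (M N : mould Omega A) : symmetrel add N ->
  diamond add M N =1 mcomp add M N.
Proof.
move=> hN [|a w] /=; first by case: hN => -> _; rewrite mulr1.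
apply: eq_bigr => c _; by rewrite ev_qsh_iter // big_map.
Qed.

End Final.

Theorem mainTheorem4 (Omega : Type) (add : Omega -> Omega -> Omega)
  (addA : associative add) (addC : commutative add)
  (R : fieldType) (A : comAlgType R) :
  (forall M N P : mould Omega A,
      diamond add (diamond add M N) P =1 diamond add M (diamond add N P)) /\
  (forall M N : mould Omega A,
      symmetrel add N -> diamond add M N =1 mcomp add M N) /\
  (forall M N : mould Omega A,
      symmetrel add M -> symmetrel add N -> symmetrel add (mcomp add M N)).
Proof.
split; last split.
- move=> M N P w.
  rewrite !diamond_DS.
  transitivity (DS add w (fun x y => DS add x (fun x' y' => M x' * (N y' * P y)))).
    apply: eq_DS => x y; rewrite diamond_DS -DS_mulr.
    by apply: eq_DS => x' y'; rewrite mulrA.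
  rewrite (@CA Omega add addA addC A (size w) w (fun a b c => M a * (N b * P c)) (leqnn _)).
  apply: eq_DS => x y; rewrite diamond_DS -DS_mull; done.
- by move=> M N hN; apply: diamond_mcomp.
- move=> M N hM hN; split; first by case: hM.
  move=> u v.
  have mc : forall w, mcomp add M N w = DS add w (fun x y => M x * N y).
    by move=> w; rewrite -diamond_mcomp // diamond_DS.
  transitivity (QS add u v (fun z => DS add z (fun x y => M x * N y))).
    by apply: eq_bigr => z _; rewrite mc.
  rewrite (@MOR' Omega add addA addC A) !mc -DS_mulr.
  apply: eq_DS => x1 y1; rewrite -DS_mull; apply: eq_DS => x2 y2.
  under eq_QS => x do rewrite QS_mull.
  case: hM => _ hM; case: hN => _ hN.
  have -> : QS add y1 y2 N = N y1 * N y2 by rewrite -hN.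
  rewrite /QS -mulr_suml.
  have -> : \sum_(i <- qsh add x1 x2) M i = M x1 * M x2 by rewrite -hM.
  ring.
Qed.
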